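(* In the general setting described in the context, let $\mathcal X=\{x_{n,k}\}$ be a Marcinkiewicz–Zygmund family for $M$ with weights $\tau_{n,k}$, constants $A,B$, and condition number $\kappa=B/A$. Let $\sigma>\sigma_{\mathrm{crit}}$, $f\in H^\sigma(M)$, and for $n\in\mathbb N$ let $p_n=\operatorname{argmin}_{p\in\mathcal P_n}\sum_{k=1}^{L_n}|f(x_{n,k})-p(x_{n,k})|^2\tau_{n,k}$. Then $$\|f-p_n\|_2\le\sqrt{1+\kappa^2}\,\|f\|_{H^\sigma}\,\phi_\sigma(n).$$
   Context: $M$ is a compact space, $\mu$ a probability measure on $M$, $\langle f,g\rangle=\int_Mf\bar g\,d\mu$, $\|\cdot\|_2$ the $L^2(M,\mu)$-norm. $\{\phi_k:k\in\mathbb N\}$ is an orthonormal basis of $L^2(M,\mu)$ of continuous functions with $\phi_1\equiv1$; $\hat f(k)=\langle f,\phi_k\rangle$. $(\lambda_k)$ is non-decreasing, $\lambda_k\ge0$, $\lambda_k\to\infty$. $H^\sigma(M)=\{f:\|f\|_{H^\sigma}^2=\sum_k|\hat f(k)|^2(1+\lambda_k^2)^\sigma<\infty\}$. $\mathcal P_n=\operatorname{span}\{\phi_k:\lambda_k\le n\}$. There is $\sigma_{\mathrm{crit}}$ such that $C_\sigma^2=\sup_{x\in M}\sum_k|\phi_k(x)|^2(1+\lambda_k^2)^{-\sigma}<\infty$ for all $\sigma>\sigma_{\mathrm{crit}}$ (so $H^\sigma(M)\subseteq C(M)$ for such $\sigma$). $\phi_\sigma(n)=\sup_{x\in M}\big(\sum_{k:\lambda_k>n}|\phi_k(x)|^2(1+\lambda_k^2)^{-\sigma}\big)^{1/2}$.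 A Marcinkiewicz–Zygmund family is $\{x_{n,k}:n\in\mathbb N,k=1,\dots,L_n\}\subseteq M$ with weights $\tau_{n,k}>0$ and constants $A,B>0$ independent of $n$ such that $A\|p\|_2^2\le\sum_{k=1}^{L_n}|p(x_{n,k})|^2\tau_{n,k}\le B\|p\|_2^2$ for all $p\in\mathcal P_n$. *)

(* Defs.v *)
From HB Require Import structures.
From mathcomp Require Import all_boot all_order all_algebra.
From mathcomp Require Import all_classical all_reals all_analysis.
From mathcomp Require Import complex.

Set Implicit Arguments.
Unset Strict Implicit.
Unset Printing Implicit Defensive.

Import Order.TTheory GRing.Theory Num.Theory numFieldNormedType.Exports.
Local Open Scope ring_scope.
Local Open Scope classical_set_scope.

Definition Borel (M : ptopologicalType) := g_sigma_algebraType (@open M).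

Section Setting.
Variables (R : realType) (M : ptopologicalType).
Variable (mu : probability (Borel M) R).

Definition cnorm2 (z : R[i]) : R := complex.Re z ^+ 2 + complex.Im z ^+ 2.

Definition L2 (f : M -> R[i]) : Prop :=
  [/\ measurable_fun setT (fun x : Borel M => complex.Re (f x)),
      measurable_fun setT (fun x : Borel M => complex.Im (f x)) &
      mu.-integrable setT (fun x : Borel M => (cnorm2 (f x))%:E)].

Definition norm2 (f : M -> R[i]) : R :=
  Num.sqrt (Rintegral mu setT (fun x : Borel M => cnorm2 (f x))).

Definition inner (f g : M -> R[i]) : R[i] :=
  (Rintegral mu setT (fun x : Borel M => complex.Re (f x * (g x)^*)) +i*
   Rintegral mu setT (fun x : Borel M => complex.Im (f x * (g x)^*)))%C.

Definition fhat (phi : nat -> M -> R[i]) (f : M -> R[i]) (k : nat) : R[i] :=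
  inner f (phi k).

(* {phi_k} is an orthonormal basis of L^2(M, mu) of continuous functions, with
   the first element (index 0 here, phi_1 in the paper) constantly 1. *)
Definition ONB (phi : nat -> M -> R[i]) : Prop :=
  [/\ (forall k, continuous (fun x : M => complex.Re (phi k x)) /\
                 continuous (fun x : M => complex.Im (phi k x))),
      (forall j k, inner (phi j) (phi k) = (j == k)%:R),
      (forall f, L2 f ->
         (fun N => norm2 (fun x => f x - \sum_(k < N) fhat phi f k * phi k x))
           @ \oo --> 0) &
      (forall x, phi 0%N x = 1)].

Definition eigen_ok (lam : nat -> R) : Prop :=
  [/\ {homo lam : j k / (j <= k)%N >-> j <= k},
      (forall k, 0 <= lam k) &
      lam @ \oo --> +oo].

Definition wgt (lam : nat -> R) (s : R) (k : nat) : R := powR (1 + lam k ^+ 2) s.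

Definition Hseries (phi : nat -> M -> R[i]) (lam : nat -> R) (s : R)
  (f : M -> R[i]) : R ^nat :=
  series (fun k => cnorm2 (fhat phi f k) * wgt lam s k).

Definition inH (phi : nat -> M -> R[i]) (lam : nat -> R) (s : R)
  (f : M -> R[i]) : Prop :=
  L2 f /\ cvgn (Hseries phi lam s f).

Definition Hnorm (phi : nat -> M -> R[i]) (lam : nat -> R) (s : R)
  (f : M -> R[i]) : R :=
  Num.sqrt (limn (Hseries phi lam s f)).

(* f is the (continuous) H^sigma-representative: f(x) = sum_k \hat f(k) phi_k(x)
   for every x (this is the identification H^sigma(M) \subseteq C(M)). *)
Definition series_rep (phi : nat -> M -> R[i]) (f : M -> R[i]) : Prop :=
  forall x,
    (fun N => complex.Re (\sum_(k < N) fhat phi f k * phi k x)) @ \oo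
      --> complex.Re (f x) /\
    (fun N => complex.Im (\sum_(k < N) fhat phi f k * phi k x)) @ \oo
      --> complex.Im (f x).

End Setting.

Section Kernel.
Variables (R : realType) (M : ptopologicalType).

(* C_sigma^2 = sup_x sum_k |phi_k(x)|^2 (1 + lambda_k^2)^(-sigma) < oo
   (the terms are non-negative, so this is: the partial sums are bounded
   uniformly in x). *)
Definition Csig_finite (phi : nat -> M -> R[i]) (lam : nat -> R) (s : R) : Prop :=
  exists C : R, forall (x : M) (N : nat),
    \sum_(k < N) cnorm2 (phi k x) * wgt lam (- s) k <= C.

Definition tail_sum (phi : nat -> M -> R[i]) (lam : nat -> R) (s : R)
  (n : nat) (x : M) : R :=
  limn (series (fun k => if n%:R < lam k
                         then cnorm2 (phi k x) * wgt lam (- s) k else 0)).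

Definition phi_sigma (phi : nat -> M -> R[i]) (lam : nat -> R) (s : R)
  (n : nat) : R :=
  sup [set Num.sqrt (tail_sum phi lam s n x) | x in [set: M]].

Definition inP (phi : nat -> M -> R[i]) (lam : nat -> R) (n : nat)
  (p : M -> R[i]) : Prop :=
  exists (N : nat) (c : nat -> R[i]),
    forall x, p x = \sum_(k < N | lam k <= n%:R) c k * phi k x.

(* weighted squared sampling error sum_{k} |f(x_{n,k}) - p(x_{n,k})|^2 tau_{n,k}
   (the paper's k = 1..L_n is k = 0..L_n - 1 here) *)
Definition sq_err (L : nat -> nat) (X : nat -> nat -> M) (tau : nat -> nat -> R)
  (n : nat) (f p : M -> R[i]) : R :=
  \sum_(k < L n) cnorm2 (f (X n k) - p (X n k)) * tau n k.

End Kernel.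

Definition is_MZ (R : realType) (M : ptopologicalType)
  (mu : probability (Borel M) R) (phi : nat -> M -> R[i]) (lam : nat -> R)
  (L : nat -> nat) (X : nat -> nat -> M) (tau : nat -> nat -> R) (A B : R) : Prop :=
  [/\ 0 < A, 0 < B,
      (forall n k, (k < L n)%N -> 0 < tau n k) &
      (forall n p, inP phi lam n p ->
         A * norm2 mu p ^+ 2 <= \sum_(k < L n) cnorm2 (p (X n k)) * tau n k
         <= B * norm2 mu p ^+ 2)].

Definition is_lsq (R : realType) (M : ptopologicalType) (phi : nat -> M -> R[i])
  (lam : nat -> R) (L : nat -> nat) (X : nat -> nat -> M) (tau : nat -> nat -> R)
  (n : nat) (f p : M -> R[i]) : Prop :=
  inP phi lam n p /\
  forall q, inP phi lam n q -> sq_err L X tau n f p <= sq_err L X tau n f q.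

(* Main.v *)
Require Import Defs.
From HB Require Import structures.
From mathcomp Require Import all_boot all_order all_algebra.
From mathcomp Require Import all_classical all_reals all_analysis.
From mathcomp Require Import complex.
From mathcomp Require Import lra ring measurable_realfun.
Import Order.TTheory GRing.Theory Num.Theory numFieldNormedType.Exports.
Local Open Scope ring_scope.
Local Open Scope classical_set_scope.

Section Aux.
Variables (R : realType) (M : ptopologicalType).
Variable (mu : probability (Borel M) R).
Implicit Types z w : R[i].

Lemma cont_meas (g : M -> R) : continuous g -> measurable_fun setT (g : Borel M -> R).
Proof.
move=> /continuousP cg; apply: (measurability _ (RGenOpens.measurableE R)).
move=> _ [_ [a [b ->] <-]]; rewrite setTI; apply: sub_sigma_algebra.
exact/cg/interval_open.
Qed.

Lemma cnorm2_ge0 z : 0 <= cnorm2 z.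
Proof. by rewrite /cnorm2 addr_ge0 // sqr_ge0. Qed.

Lemma cnorm2E z : cnorm2 z = ComplexField.Normc.normc z ^+ 2.
Proof. by case: z => a b; rewrite /cnorm2 /= sqr_sqrtr // addr_ge0 // sqr_ge0. Qed.

Lemma ReM (z w : R[i]) : complex.Re (z * w) = complex.Re z * complex.Re w - complex.Im z * complex.Im w.
Proof. by case: z => a b; case: w => c d. Qed.
Lemma ImM (z w : R[i]) : complex.Im (z * w) = complex.Re z * complex.Im w + complex.Im z * complex.Re w.
Proof. by case: z => a b; case: w => c d. Qed.
Lemma ReJ (z : R[i]) : complex.Re (z^*)%C = complex.Re z. Proof. by case: z. Qed.
Lemma ImJ (z : R[i]) : complex.Im (z^*)%C = - complex.Im z. Proof. by case: z. Qed.
Lemma ReD (z w : R[i]) : complex.Re (z + w) = complex.Re z + complex.Re w. Proof. by case: z; case: w. Qed.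
Lemma ImD (z w : R[i]) : complex.Im (z + w) = complex.Im z + complex.Im w. Proof. by case: z; case: w. Qed.
Lemma ReN (z : R[i]) : complex.Re (- z) = - complex.Re z. Proof. by case: z. Qed.
Lemma ImN (z : R[i]) : complex.Im (- z) = - complex.Im z. Proof. by case: z. Qed.
Lemma ReB (z w : R[i]) : complex.Re (z - w) = complex.Re z - complex.Re w. Proof. by rewrite ReD ReN. Qed.
Lemma ImB (z w : R[i]) : complex.Im (z - w) = complex.Im z - complex.Im w. Proof. by rewrite ImD ImN. Qed.
Lemma Re1 : complex.Re (1 : R[i]) = 1. Proof. by []. Qed.
Lemma Im1 : complex.Im (1 : R[i]) = 0. Proof. by []. Qed.
Lemma ReC (t : R) : complex.Re (t%:C)%C = t. Proof. by []. Qed.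
Lemma ImC (t : R) : complex.Im (t%:C)%C = 0. Proof. by []. Qed.

Lemma Re_sum I (r : seq I) (P : pred I) (F : I -> R[i]) :
  complex.Re (\sum_(i <- r | P i) F i) = \sum_(i <- r | P i) complex.Re (F i).
Proof. by elim/big_rec2: _ => [//|i y z _ <-]; rewrite ReD. Qed.
Lemma Im_sum I (r : seq I) (P : pred I) (F : I -> R[i]) :
  complex.Im (\sum_(i <- r | P i) F i) = \sum_(i <- r | P i) complex.Im (F i).
Proof. by elim/big_rec2: _ => [//|i y z _ <-]; rewrite ImD. Qed.

Lemma cnorm2M z w : cnorm2 (z * w) = cnorm2 z * cnorm2 w.
Proof. by rewrite !cnorm2E ComplexField.Normc.normcM exprMn. Qed.

Lemma cnorm2_ReJ z : complex.Re (z * z^*)%C = cnorm2 z.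
Proof. by rewrite ReM ReJ ImJ /cnorm2; lra. Qed.


Definition measR (h : M -> R) := measurable_fun setT (h : Borel M -> R).
Definition intR (h : M -> R) := mu.-integrable setT (fun x : Borel M => (h x)%:E).

Lemma intR_dom h g : measR h -> intR g -> (forall x, `|h x| <= g x) -> intR h.
Proof.
move=> mh ig hg; apply: le_integrable ig => //=.
  exact/measurable_EFinP.
by move=> x _ /=; rewrite lee_fin (le_trans (hg x)) // ler_norm.
Qed.

Lemma intR_cst (c : R) : intR (fun _ => c).
Proof. exact: (finite_measure_integrable_cst mu c measurableT). Qed.

Lemma intRD h g : intR h -> intR g -> intR (fun x => h x + g x).
Proof. by move=> ih ig; apply: eq_integrable (integrableD _ ih ig) => // x. Qed.

Lemma intRZ (c : R) h : intR h -> intR (fun x => c * h x).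
Proof. by move=> ih; apply: eq_integrable (integrableZl _ c ih) => // x. Qed.

Lemma intRN h : intR h -> intR (fun x => - h x).
Proof.
move=> ih; suff -> : (fun x => - h x) = (fun x => -1 * h x) by apply: intRZ.
by apply: funext => x; rewrite mulN1r.
Qed.

Lemma intR_meas h : intR h -> measR h.
Proof. by case/integrableP => /measurable_EFinP. Qed.

Lemma RintD h g : intR h -> intR g ->
  Rintegral mu setT (fun x : Borel M => h x + g x) = Rintegral mu setT h + Rintegral mu setT g.
Proof. by move=> ih ig; rewrite RintegralD. Qed.

Lemma RintZ (c : R) h : intR h ->
  Rintegral mu setT (fun x : Borel M => c * h x) = c * Rintegral mu setT h.
Proof. by move=> ih; rewrite RintegralZl. Qed.

Lemma Rint_cst (c : R) : Rintegral mu setT (fun _ : Borel M => c) = c.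
Proof. rewrite Rintegral_cst //; have -> : fine (mu [set: Borel M]) = 1 by exact: (congr1 fine (probability_setT mu)). by rewrite mulr1. Qed.

Lemma Rint_le h g : intR h -> intR g -> (forall x, h x <= g x) ->
  Rintegral mu setT h <= Rintegral mu setT g.
Proof. by move=> ih ig hg; apply: le_Rintegral. Qed.

Definition mC (u : M -> R[i]) := measR (fun x => complex.Re (u x)) /\ measR (fun x => complex.Im (u x)).

Lemma mC_L2 u : L2 mu u <-> mC u /\ intR (fun x => cnorm2 (u x)).
Proof. by split => [[a b c]|[[a b] c]]. Qed.

Lemma measRD h g : measR h -> measR g -> measR (fun x => h x + g x).
Proof. exact: measurable_funD. Qed.
Lemma measRM h g : measR h -> measR g -> measR (fun x => h x * g x).
Proof. exact: measurable_funM. Qed.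
Lemma measRN h : measR h -> measR (fun x => - h x).
Proof. exact: measurable_funN. Qed.
Lemma measRX h : measR h -> measR (fun x => h x ^+ 2).
Proof. exact: measurable_funX. Qed.
Lemma measR_cst (c : R) : measR (fun _ => c).
Proof. exact: measurable_cst. Qed.

Lemma mC_cnorm2 u : mC u -> measR (fun x => cnorm2 (u x)).
Proof. by case=> a b; rewrite /cnorm2; apply: measRD; apply: measRX. Qed.

Lemma mCD {u v : M -> R[i]} : mC u -> mC v -> mC (fun x => u x + v x).
Proof.
case=> a b [c d]; split.
  by under [X in measR X]eq_fun do rewrite ReD; apply: measRD.
by under [X in measR X]eq_fun do rewrite ImD; apply: measRD.
Qed.

Lemma mCM {u v : M -> R[i]} : mC u -> mC v -> mC (fun x => u x * v x).
Proof.
case=> a b [c d]; split.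
  under [X in measR X]eq_fun do rewrite ReM.
  by apply: measRD; [apply: measRM|apply: measRN; apply: measRM].
under [X in measR X]eq_fun do rewrite ImM.
by apply: measRD; apply: measRM.
Qed.

Lemma mCJ {u : M -> R[i]} : mC u -> mC (fun x => (u x)^*)%C.
Proof.
case=> a b; split.
  by under [X in measR X]eq_fun do rewrite ReJ.
by under [X in measR X]eq_fun do rewrite ImJ; apply: measRN.
Qed.

Lemma mC_cst c : mC (fun _ => c).
Proof. by split; apply: measR_cst. Qed.

Lemma cnorm2D_le z w : cnorm2 (z + w) <= 2 * (cnorm2 z + cnorm2 w).
Proof.
rewrite /cnorm2 ReD ImD.
have := sqr_ge0 (complex.Re z - complex.Re w); have := sqr_ge0 (complex.Im z - complex.Im w).
rewrite !sqrrD ?sqrrN; lra.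
Qed.

Lemma L2D {u v : M -> R[i]} : L2 mu u -> L2 mu v -> L2 mu (fun x => u x + v x).
Proof.
move=> /mC_L2 [mu_ iu] /mC_L2 [mv iv]; apply/mC_L2; split; first exact: mCD.
apply: (@intR_dom _ (fun x => 2 * (cnorm2 (u x) + cnorm2 (v x)))).
- by apply: mC_cnorm2; apply: mCD.
- by apply: intRZ; apply: intRD.
- by move=> x; rewrite ger0_norm ?cnorm2_ge0 // cnorm2D_le.
Qed.

Lemma L2Z c {u : M -> R[i]} : L2 mu u -> L2 mu (fun x => c * u x).
Proof.
move=> /mC_L2 [mu_ iu]; apply/mC_L2; split; first by apply: mCM => //; exact: mC_cst.
under [X in intR X]eq_fun do rewrite cnorm2M.
exact: intRZ.
Qed.

Lemma L2N {u : M -> R[i]} : L2 mu u -> L2 mu (fun x => - u x).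
Proof.
move=> h; suff -> : (fun x => - u x) = (fun x => -1 * u x) by apply: L2Z.
by apply: funext => x; rewrite mulN1r.
Qed.

Lemma L2B {u v : M -> R[i]} : L2 mu u -> L2 mu v -> L2 mu (fun x => u x - v x).
Proof. by move=> hu /L2N hv; apply: L2D. Qed.

Lemma L2_0 : L2 mu (fun _ => 0).
Proof.
apply/mC_L2; split; first exact: mC_cst.
by rewrite /cnorm2 /=; apply: intR_cst.
Qed.

Lemma prod_bound (a b : R) : `|a * b| <= a ^+ 2 + b ^+ 2.
Proof.
rewrite normrM -[a ^+ 2]real_normK ?num_real // -[b ^+ 2]real_normK ?num_real //.
have := sqr_ge0 (`|a| - `|b|); have := normr_ge0 a; have := normr_ge0 b.
rewrite sqrrB; nra.
Qed.

Lemma int_ReJ {u v : M -> R[i]} : L2 mu u -> L2 mu v -> intR (fun x => complex.Re (u x * (v x)^*)%C).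
Proof.
move=> /mC_L2 [mu_ iu] /mC_L2 [mv iv].
apply: (@intR_dom _ (fun x => cnorm2 (u x) + cnorm2 (v x))).
- by case: (mCM mu_ (mCJ mv)).
- exact: intRD.
- move=> x; rewrite ReM ReJ ImJ /cnorm2.
  have h1 := prod_bound (complex.Re (u x)) (complex.Re (v x)).
  have h2 := prod_bound (complex.Im (u x)) (complex.Im (v x)).
  move: h1 h2; rewrite mulrN opprK; move=> h1 h2; rewrite (le_trans (ler_normD _ _)) //; lra.
Qed.

Lemma int_ImJ {u v : M -> R[i]} : L2 mu u -> L2 mu v -> intR (fun x => complex.Im (u x * (v x)^*)%C).
Proof.
move=> /mC_L2 [mu_ iu] /mC_L2 [mv iv].
apply: (@intR_dom _ (fun x => cnorm2 (u x) + cnorm2 (v x))).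
- by case: (mCM mu_ (mCJ mv)).
- exact: intRD.
- move=> x; rewrite ImM ReJ ImJ /cnorm2.
  have h1 := prod_bound (complex.Re (u x)) (complex.Im (v x)).
  have h2 := prod_bound (complex.Im (u x)) (complex.Re (v x)).
  rewrite (le_trans (ler_normD _ _)) //; move: h1 h2; rewrite mulrN normrN; lra.
Qed.


Lemma Rint_ext (h g : M -> R) : (forall x, h x = g x) ->
  Rintegral mu setT (h : Borel M -> R) = Rintegral mu setT (g : Borel M -> R).
Proof. by move=> hg; congr Rintegral; apply: funext. Qed.

Lemma inner_ext (u u' v v' : M -> R[i]) : (forall x, u x = u' x) -> (forall x, v x = v' x) ->
  inner mu u v = inner mu u' v'.
Proof.
move=> e1 e2; have -> : u = u' by apply: funext.
by have -> : v = v' by apply: funext.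
Qed.

Lemma RintN h : intR h -> Rintegral mu setT (fun x : Borel M => - h x) = - Rintegral mu setT h.
Proof.
move=> ih; rewrite -mulN1r -RintZ //; apply: Rint_ext => x; by rewrite mulN1r.
Qed.

Lemma innerD_l (u v w : M -> R[i]) : L2 mu u -> L2 mu v -> L2 mu w ->
  inner mu (fun x => u x + v x) w = inner mu u w + inner mu v w.
Proof.
move=> hu hv hw; rewrite /inner.
rewrite (@Rint_ext _ (fun x => complex.Re (u x * (w x)^*)%C + complex.Re (v x * (w x)^*)%C)); last first.
  by move=> x; rewrite mulrDl ReD.
rewrite (@Rint_ext (fun x => complex.Im _) (fun x => complex.Im (u x * (w x)^*)%C + complex.Im (v x * (w x)^*)%C)); last first.
  by move=> x; rewrite mulrDl ImD.
rewrite !RintD //; try (by apply: int_ImJ); try (by apply: int_ReJ).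
Qed.

Lemma innerZ_l c (u w : M -> R[i]) : L2 mu u -> L2 mu w ->
  inner mu (fun x => c * u x) w = c * inner mu u w.
Proof.
move=> hu hw; rewrite /inner.
rewrite (@Rint_ext _ (fun x => complex.Re c * complex.Re (u x * (w x)^*)%C + - (complex.Im c * complex.Im (u x * (w x)^*)%C))); last first.
  by move=> x; rewrite -mulrA; exact: ReM.
rewrite (@Rint_ext (fun x => complex.Im _) (fun x => complex.Re c * complex.Im (u x * (w x)^*)%C + complex.Im c * complex.Re (u x * (w x)^*)%C)); last first.
  by move=> x; rewrite -mulrA; exact: ImM.
have i1 := int_ReJ hu hw; have i2 := int_ImJ hu hw.
rewrite !RintD ?RintN ?RintZ //; try (by apply: intRZ); try (by apply: intRN; apply: intRZ).
by case: c => a b.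
Qed.

Lemma inner_conj {u w : M -> R[i]} : L2 mu u -> L2 mu w -> inner mu u w = ((inner mu w u)^*)%C.
Proof.
move=> hu hw; rewrite /inner /=.
rewrite (@Rint_ext (fun x => complex.Re (u x * _)%C) (fun x => complex.Re (w x * (u x)^*)%C)); last first.
  by move=> x; rewrite !ReM !ReJ !ImJ; ring.
rewrite (@Rint_ext (fun x => complex.Im (u x * _)%C) (fun x => - complex.Im (w x * (u x)^*)%C)); last first.
  by move=> x; rewrite !ImM !ReJ !ImJ; ring.
by rewrite RintN //; apply: int_ImJ.
Qed.

Lemma norm2_sq (u : M -> R[i]) : norm2 mu u ^+ 2 = complex.Re (inner mu u u).
Proof.
rewrite /norm2 /inner /= sqr_sqrtr; last by apply: Rintegral_ge0 => x _; exact: cnorm2_ge0.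
by apply: Rint_ext => x; rewrite cnorm2_ReJ.
Qed.

Lemma norm2_ge0 (u : M -> R[i]) : 0 <= norm2 mu u.
Proof. exact: sqrtr_ge0. Qed.

Lemma pythag (g h : M -> R[i]) : L2 mu g -> L2 mu h -> inner mu g h = 0 ->
  norm2 mu (fun x => g x + h x) ^+ 2 = norm2 mu g ^+ 2 + norm2 mu h ^+ 2.
Proof.
move=> hg hh gh0.
have hgh := L2D hg hh.
rewrite !norm2_sq innerD_l // (inner_conj hg hgh) (inner_conj hh hgh).
by rewrite !innerD_l // (inner_conj hh hg) gh0 conjc0 addr0 add0r ReD !ReJ.

Qed.

Lemma norm2_le (u : M -> R[i]) (C : R) : L2 mu u -> (forall x, cnorm2 (u x) <= C) -> norm2 mu u ^+ 2 <= C.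
Proof.
move=> /mC_L2 [_ iu] hC; rewrite /norm2 sqr_sqrtr; last by apply: Rintegral_ge0 => x _; exact: cnorm2_ge0.
by rewrite -[leRHS]Rint_cst; apply: Rint_le => //; apply: intR_cst.
Qed.


Lemma sum_recr (N : nat) (P : pred nat) (G : nat -> R[i]) :
  \sum_(k < N.+1 | P k) G k = \sum_(k < N | P k) G k + (if P N then G N else 0).
Proof. by rewrite big_mkcond big_ord_recr /= -big_mkcond. Qed.

Lemma inner0_l {w : M -> R[i]} : L2 mu w -> inner mu (fun _ => 0) w = 0.
Proof.
move=> hw; rewrite (@inner_ext _ (fun x => 0 * w x) w w) // ?innerZ_l ?mul0r // => x.
by rewrite mul0r.
Qed.

Lemma L2_sum N (P : pred nat) (F : nat -> M -> R[i]) : (forall k, L2 mu (F k)) ->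
  L2 mu (fun x => \sum_(k < N | P k) F k x).
Proof.
move=> hF; elim: N => [|N IH].
  by under eq_fun do rewrite big_ord0; exact: L2_0.
have -> : (fun x => \sum_(k < N.+1 | P k) F k x) = (fun x => \sum_(k < N | P k) F k x + (if P N then F N x else 0)).
  by apply: funext => x; rewrite (sum_recr N P (fun k => F k x)).
apply: L2D => //; case: (P N) => //; exact: L2_0.
Qed.

Lemma inner_sum N (P : pred nat) (F : nat -> M -> R[i]) (w : M -> R[i]) : (forall k, L2 mu (F k)) -> L2 mu w ->
  inner mu (fun x => \sum_(k < N | P k) F k x) w = \sum_(k < N | P k) inner mu (F k) w.
Proof.
move=> hF hw; elim: N => [|N IH].
  rewrite big_ord0; transitivity (inner mu (fun _ => 0) w); last exact: inner0_l.
  by apply: inner_ext => // x; rewrite big_ord0.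
rewrite (sum_recr N P (fun k => inner mu (F k) w)) -IH.
have -> : (if P N then inner mu (F N) w else 0) = inner mu (fun x => if P N then F N x else 0) w.
  by case: (P N) => //; rewrite inner0_l.
rewrite -innerD_l //; [ | exact: L2_sum | by case: (P N) => //; exact: L2_0].
by apply: inner_ext => // x; rewrite (sum_recr N P (fun k => F k x)).
Qed.

Lemma intR_of_Rint1 (h : M -> R) : measR h -> (forall x, 0 <= h x) ->
  Rintegral mu setT h = 1 -> intR h.
Proof.
move=> mh h0 h1; apply/integrableP; split; first exact/measurable_EFinP.
rewrite ltey; apply/negP => /eqP hinf.
move: h1; rewrite /Rintegral.
have -> : (\int[mu]_(x in setT) (h x)%:E)%E = (\int[mu]_(x in setT) `|(h x)%:E|)%E.
  by apply: eq_integral => x _; rewrite gee0_abs // lee_fin.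
by rewrite hinf /=; move/eqP; rewrite eq_sym oner_eq0.
Qed.


Lemma widen_sum N1 N2 (P : pred nat) (G : nat -> R[i]) : (N1 <= N2)%N ->
  \sum_(k < N1 | P k) G k = \sum_(k < N2 | P k) (if (k < N1)%N then G k else 0).
Proof. by move=> le12; rewrite (big_ord_widen_cond _ P G le12) big_mkcondr. Qed.

Section Phi.
Variables (phi : nat -> M -> R[i]) (lam : nat -> R).
Hypothesis hONB : ONB mu phi.

Lemma L2phi k : L2 mu (phi k).
Proof.
case: hONB => cont orth _ _.
have mk : mC (phi k) by case: (cont k) => c1 c2; split; apply: cont_meas.
apply/mC_L2; split => //.
apply: intR_of_Rint1; first exact: mC_cnorm2.
  by move=> x; apply: cnorm2_ge0.
have := orth k k; rewrite eqxx /inner => /(congr1 (@complex.Re R)) /= <-.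
by apply: Rint_ext => x; rewrite cnorm2_ReJ.
Qed.

Lemma inP_L2 {n q} : inP phi lam n q -> L2 mu q.
Proof.
case=> N [c hq]; have -> : q = (fun x => \sum_(k < N | lam k <= n%:R) c k * phi k x).
  by apply: funext.
apply: (@L2_sum N (fun k => lam k <= n%:R) (fun k x => c k * phi k x)) => k.
exact: (L2Z (c k) (L2phi k)).
Qed.

Lemma inP_lin n a b u v : inP phi lam n u -> inP phi lam n v ->
  inP phi lam n (fun x => a * u x + b * v x).
Proof.
case=> N1 [c1 h1] [N2 [c2 h2]].
exists (N1 + N2)%N, (fun k => a * (if (k < N1)%N then c1 k else 0) + b * (if (k < N2)%N then c2 k else 0)).
move=> x; rewrite h1 h2 (widen_sum _ _ (fun k => lam k <= n%:R) (fun k => c1 k * phi k x) (leq_addr N2 N1)).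
rewrite (widen_sum _ _ (fun k => lam k <= n%:R) (fun k => c2 k * phi k x) (leq_addl N1 N2)).
rewrite !mulr_sumr -big_split /=; apply: eq_bigr => k _.
by case: ifP => _; case: ifP => _; ring.
Qed.

Lemma inP_orth n (w q : M -> R[i]) : L2 mu w ->
  (forall k, lam k <= n%:R -> inner mu w (phi k) = 0) ->
  inP phi lam n q -> inner mu w q = 0.
Proof.
move=> hw hk hq; rewrite (inner_conj hw (inP_L2 hq)).
case: hq => N [c hq].
rewrite (@inner_ext _ (fun x => \sum_(k < N | lam k <= n%:R) c k * phi k x) w w) //.
rewrite (@inner_sum N (fun k => lam k <= n%:R) (fun k x => c k * phi k x)) //; last by move=> k; exact: (L2Z (c k) (L2phi k)).
rewrite big1 ?conjc0 // => k hk'.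
by rewrite innerZ_l //; [rewrite (inner_conj (L2phi k) hw) hk // conjc0 mulr0 | apply: L2phi].
Qed.

End Phi.


Lemma wCS (K : nat) (Q : pred nat) (al be p : nat -> R) : (forall k, 0 < p k) ->
  (\sum_(k < K | Q k) al k * be k) ^+ 2 <=
  (\sum_(k < K | Q k) al k ^+ 2 * p k) * (\sum_(k < K | Q k) be k ^+ 2 * (p k)^-1).
Proof.
move=> p0.
set A := \sum_(k < K | Q k) al k ^+ 2 * p k.
set B := \sum_(k < K | Q k) be k ^+ 2 * (p k)^-1.
set C := \sum_(k < K | Q k) al k * be k.
have A0 : 0 <= A by apply: sumr_ge0 => k _; rewrite mulr_ge0 ?sqr_ge0 ?ltW.
have B0 : 0 <= B by apply: sumr_ge0 => k _; rewrite mulr_ge0 ?sqr_ge0 ?invr_ge0 ?ltW.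
have H t : 0 <= t ^+ 2 * A - 2 * t * C + B.
  have -> : t ^+ 2 * A - 2 * t * C + B =
      \sum_(k < K | Q k) p k * (t * al k - be k / p k) ^+ 2.
    rewrite /A /B /C !mulr_sumr -sumrN -!big_split /=.
    apply: eq_bigr => k _; have := p0 k; rewrite lt0r => /andP[pk _].
    by field.
  by apply: sumr_ge0 => k _; rewrite mulr_ge0 ?sqr_ge0 ?ltW.
have [A00|Apos] := eqVneq A 0.
  have [C00|Cn] := eqVneq C 0; first by rewrite C00 A00 expr0n /= mul0r.
  have := H ((B + 1) / (2 * C)); rewrite A00 mulr0 add0r.
  have -> : 2 * ((B + 1) / (2 * C)) * C = B + 1.
    by field; rewrite Cn.
  lra.
have Ap : 0 < A by rewrite lt0r Apos.
have := H (C / A).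
have -> : (C / A) ^+ 2 * A - 2 * (C / A) * C + B = B - C ^+ 2 / A by field.
rewrite subr_ge0 ler_pdivrMr // => h; by rewrite mulrC.
Qed.

Lemma normc_ge0 z : 0 <= ComplexField.Normc.normc z.
Proof. by case: z => a b; apply: sqrtr_ge0. Qed.

Lemma normc_sum (K : nat) (Q : pred nat) (a b : nat -> R[i]) :
  ComplexField.Normc.normc (\sum_(k < K | Q k) a k * b k) <=
  \sum_(k < K | Q k) ComplexField.Normc.normc (a k) * ComplexField.Normc.normc (b k).
Proof.
elim/big_rec2: _ => [|k y1 y2 _ h]; first by rewrite ComplexField.Normc.normc0.
rewrite (le_trans (le_normcD _ _)) // ComplexField.Normc.normcM lerD2l //.
Qed.

Lemma cCS (K : nat) (Q : pred nat) (a b : nat -> R[i]) (p : nat -> R) : (forall k, 0 < p k) ->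
  cnorm2 (\sum_(k < K | Q k) a k * b k) <=
  (\sum_(k < K | Q k) cnorm2 (a k) * p k) * (\sum_(k < K | Q k) cnorm2 (b k) * (p k)^-1).
Proof.
move=> p0; rewrite cnorm2E.
have h1 := normc_sum K Q a b.
have n0 := normc_ge0 (\sum_(k < K | Q k) a k * b k).
have h2 : ComplexField.Normc.normc (\sum_(k < K | Q k) a k * b k) ^+ 2 <=
   (\sum_(k < K | Q k) ComplexField.Normc.normc (a k) * ComplexField.Normc.normc (b k)) ^+ 2.
  by apply: lerXn2r => //; rewrite nnegrE // (le_trans n0 h1).
apply: (le_trans h2); apply: (le_trans (wCS K Q (fun k => ComplexField.Normc.normc (a k)) (fun k => ComplexField.Normc.normc (b k)) p p0)).
by apply: ler_pM; try (by apply: sumr_ge0 => k _; rewrite mulr_ge0 ?sqr_ge0 ?invr_ge0 ?ltW);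
   rewrite le_eqVlt; apply/orP; left; apply/eqP; apply: eq_bigr => k _; rewrite cnorm2E.
Qed.

Lemma series_nd (u : nat -> R) : (forall k, 0 <= u k) -> nondecreasing_seq (series u).
Proof. by move=> u0; apply/nondecreasing_seqP => k; rewrite seriesSr lerDl. Qed.

Lemma series_bounded (u : nat -> R) (C : R) : (forall k, 0 <= u k) -> (forall N, series u N <= C) ->
  cvgn (series u) /\ limn (series u) <= C.
Proof.
move=> u0 uC.
have hub : has_ubound (range (series u)) by exists C => _ [N _ <-].
have hc := nondecreasing_cvgn (@series_nd u u0) hub.
have cv : cvgn (series u) by apply/cvg_ex; exists (sup (range (series u))).
split => //; rewrite (cvg_lim _ hc) //; apply: ge_sup.
  by exists (series u 0%N), 0%N.
by move=> _ [N _ <-].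
Qed.


Lemma wgt_gt0 (lam : nat -> R) s k : 0 < wgt lam s k.
Proof. by apply: powR_gt0; rewrite ltr_pwDl // sqr_ge0. Qed.

Lemma wgtN (lam : nat -> R) s k : wgt lam (- s) k = (wgt lam s k)^-1.
Proof. by rewrite /wgt powRN. Qed.

Section Tail.
Variables (phi : nat -> M -> R[i]) (lam : nat -> R) (sigma : R) (n : nat) (Ccs : R).
Hypothesis hC : forall y N, \sum_(k < N) cnorm2 (phi k y) * wgt lam (- sigma) k <= Ccs.

Definition tterm x k := if n%:R < lam k then cnorm2 (phi k x) * wgt lam (- sigma) k else 0.

Lemma tterm_ge0 x k : 0 <= tterm x k.
Proof. by rewrite /tterm; case: ifP => // _; rewrite mulr_ge0 ?cnorm2_ge0 ?ltW ?wgt_gt0. Qed.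

Lemma series_tterm x N : series (tterm x) N = \sum_(k < N | ~~ (lam k <= n%:R)) cnorm2 (phi k x) * wgt lam (- sigma) k.
Proof.
rewrite seriesEord /= [RHS]big_mkcond /=; apply: eq_bigr => k _.
by rewrite /tterm -real_ltNge ?num_real.
Qed.

Lemma tail_facts x : cvgn (series (tterm x)) /\ 0 <= tail_sum phi lam sigma n x /\ tail_sum phi lam sigma n x <= Ccs
  /\ (forall N, series (tterm x) N <= tail_sum phi lam sigma n x).
Proof.
have hb : forall N, series (tterm x) N <= Ccs.
  move=> N; rewrite series_tterm (le_trans _ (hC x N)) //.
  rewrite [leRHS](bigID (fun k : 'I_N => ~~ (lam k <= n%:R))) /= lerDl.
  by apply: sumr_ge0 => k _; rewrite mulr_ge0 ?cnorm2_ge0 ?ltW ?wgt_gt0.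
have [cv le] := @series_bounded _ _ (tterm_ge0 x) hb.
have nd := @series_nd _ (tterm_ge0 x).
have hle := nondecreasing_cvgn_le nd cv.
split => //; split; last by split.
by apply: le_trans (hle 0%N); rewrite /series /= big_geq.
Qed.

End Tail.


Lemma sum_split_tail (N0 Mm : nat) (lam : nat -> R) (n : nat) (F : nat -> R[i]) :
  (forall k, (N0 <= k)%N -> n%:R < lam k) -> (N0 <= Mm)%N ->
  \sum_(k < Mm) F k - \sum_(k < N0 | lam k <= n%:R) F k = \sum_(k < Mm | ~~ (lam k <= n%:R)) F k.
Proof.
move=> hN0 hM.
rewrite (bigID (fun k : 'I_Mm => lam k <= n%:R)) /=.
rewrite (widen_sum _ _ (fun k => lam k <= n%:R) F hM).
have -> : \sum_(k < Mm | lam k <= n%:R) (if (k < N0)%N then F k else 0) = \sum_(k < Mm | lam k <= n%:R) F k.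
  apply: eq_bigr => k hk; case: ifP => // /negbT; rewrite -leqNgt => /hN0.
  by rewrite real_ltNge ?num_real // hk.
by rewrite addrAC subrr add0r.
Qed.

Lemma pointwise_bound (phi : nat -> M -> R[i]) (lam : nat -> R) (sigma : R) (f : M -> R[i])
  (n N0 : nat) (Ccs : R) x :
  (forall k, (N0 <= k)%N -> n%:R < lam k) ->
  (forall y N, \sum_(k < N) cnorm2 (phi k y) * wgt lam (- sigma) k <= Ccs) ->
  cvgn (Hseries mu phi lam sigma f) ->
  series_rep mu phi f ->
  cnorm2 (f x - \sum_(k < N0 | lam k <= n%:R) fhat mu phi f k * phi k x)
   <= limn (Hseries mu phi lam sigma f) * tail_sum phi lam sigma n x.
Proof.
move=> hN0 hC hH hrep.
set a := fhat mu phi f.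
set P := \sum_(k < N0 | lam k <= n%:R) a k * phi k x.
set t := fun Mm => \sum_(k < Mm) a k * phi k x - P.
have [hRe hIm] := hrep x.
have cRe : (fun Mm => complex.Re (t Mm)) @ \oo --> complex.Re (f x) - complex.Re P.
  rewrite /t; under eq_fun do rewrite ReB.
  by apply: cvgB; [exact: hRe | exact: cvg_cst].
have cIm : (fun Mm => complex.Im (t Mm)) @ \oo --> complex.Im (f x) - complex.Im P.
  rewrite /t; under eq_fun do rewrite ImB.
  by apply: cvgB; [exact: hIm | exact: cvg_cst].
have hc : (fun Mm => cnorm2 (t Mm)) @ \oo --> cnorm2 (f x - P).
  rewrite /cnorm2 ReB ImB.
  apply: cvgD; rewrite expr2; under eq_fun do rewrite expr2; exact: cvgM.
apply: (cvgr_to_le hc).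
have [cvT [T0 [_ hT]]] := @tail_facts phi lam sigma n Ccs hC x.
have Hnd := @series_nd _ (fun k => mulr_ge0 (cnorm2_ge0 (a k)) (ltW (wgt_gt0 lam sigma k))).
have hHle := nondecreasing_cvgn_le Hnd hH.
near=> Mm.
have hM : (N0 <= Mm)%N by near: Mm; apply: nbhs_infty_ge.
rewrite /t /P (@sum_split_tail N0 Mm lam n (fun k => a k * phi k x) hN0 hM).
apply: (le_trans (@cCS Mm (fun k => ~~ (lam k <= n%:R)) a (fun k => phi k x) _ (wgt_gt0 lam sigma))).
apply: ler_pM.
- by apply: sumr_ge0 => k _; rewrite mulr_ge0 ?cnorm2_ge0 ?ltW ?wgt_gt0.
- by apply: sumr_ge0 => k _; rewrite mulr_ge0 ?cnorm2_ge0 ?invr_ge0 ?ltW ?wgt_gt0.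
- apply: le_trans (hHle Mm).
  rewrite /Hseries seriesEord /= [leRHS](bigID (fun k : 'I_Mm => ~~ (lam k <= n%:R))) /= lerDl.
  by apply: sumr_ge0 => k _; rewrite mulr_ge0 ?cnorm2_ge0 ?ltW ?wgt_gt0.
- apply: le_trans (hT Mm); rewrite series_tterm le_eqVlt; apply/orP; left; apply/eqP.
  by apply: eq_bigr => k _; rewrite wgtN.
Unshelve. all: by end_near.
Qed.


Lemma ps_facts (phi : nat -> M -> R[i]) (lam : nat -> R) (sigma : R) (n : nat) (Ccs : R) :
  (forall y N, \sum_(k < N) cnorm2 (phi k y) * wgt lam (- sigma) k <= Ccs) ->
  (forall x, tail_sum phi lam sigma n x <= phi_sigma phi lam sigma n ^+ 2) /\
  0 <= phi_sigma phi lam sigma n.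
Proof.
move=> hC.
have tf := @tail_facts phi lam sigma n Ccs hC.
have ub : has_ubound [set Num.sqrt (tail_sum phi lam sigma n x) | x in [set: M]].
  exists (Num.sqrt Ccs) => _ [y _ <-]; apply: ler_wsqrtr.
  by case: (tf y) => _ [_ []].
have le1 x : Num.sqrt (tail_sum phi lam sigma n x) <= phi_sigma phi lam sigma n.
  by apply: ub_le_sup => //; exists x.
have ps0 : 0 <= phi_sigma phi lam sigma n by apply: le_trans (le1 point); exact: sqrtr_ge0.
split => // x.
case: (tf x) => _ [t0 _].
rewrite -(sqr_sqrtr t0); apply: lerXn2r => //; rewrite nnegrE ?sqrtr_ge0 //.
Qed.

Lemma cnorm2_sub_t z w (t : R) :
  cnorm2 (z - (t%:C)%C * w) = cnorm2 z - 2 * t * complex.Re (z * (w^*)%C) + t ^+ 2 * cnorm2 w.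
Proof. by rewrite /cnorm2 ReB ImB !ReM !ImM ReJ ImJ ReC ImC; ring. Qed.

Lemma disc_proj (L : nat) (xs : nat -> M) (tau : nat -> R) (e h : M -> R[i]) :
  (forall k, (k < L)%N -> 0 <= tau k) ->
  (forall t : R, \sum_(k < L) cnorm2 (e (xs k)) * tau k <=
                 \sum_(k < L) cnorm2 (e (xs k) - (t%:C)%C * h (xs k)) * tau k) ->
  \sum_(k < L) cnorm2 (h (xs k)) * tau k <= \sum_(k < L) cnorm2 (e (xs k) - h (xs k)) * tau k.
Proof.
move=> tau0 hopt.
set D := \sum_(k < L) cnorm2 (e (xs k)) * tau k.
set b := \sum_(k < L) complex.Re (e (xs k) * (h (xs k))^*)%C * tau k.
set c := \sum_(k < L) cnorm2 (h (xs k)) * tau k.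
have E t : \sum_(k < L) cnorm2 (e (xs k) - (t%:C)%C * h (xs k)) * tau k = D - 2 * t * b + t ^+ 2 * c.
  rewrite /D /b /c !mulr_sumr -sumrB -big_split /=; apply: eq_bigr => k _.
  by rewrite cnorm2_sub_t; ring.
have D0 : 0 <= D by apply: sumr_ge0 => k _; rewrite mulr_ge0 ?cnorm2_ge0 ?tau0.
have c0 : 0 <= c by apply: sumr_ge0 => k _; rewrite mulr_ge0 ?cnorm2_ge0 ?tau0.
have key : forall s, s * (c + 1) = b -> D <= D - 2 * s * b + s ^+ 2 * c -> b = 0.
  move=> s hs H; rewrite -hs in H.
  have H2 : s ^+ 2 * (c + 2) <= 0 by rewrite !expr2 in H *; nra.
  have s0 : s = 0.
    apply/eqP; rewrite -sqrf_eq0 eq_le sqr_ge0 andbT.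
    by rewrite -(pmulr_lle0 _ (_ : 0 < c + 2)) ?(ltr_pwDr _ c0) // mulrC.
  by rewrite -hs s0 mul0r.
have b0 : b = 0.
  apply: (key (b / (c + 1))); first by rewrite mulfVK // lt0r_neq0 // ltr_pwDr.
  by rewrite -E; apply: hopt.
have := E 1; rewrite b0 mulr0 subr0 expr1n mul1r => E1.
have -> : \sum_(k < L) cnorm2 (e (xs k) - h (xs k)) * tau k = D + c.
  rewrite -E1; apply: eq_bigr => k _; by rewrite (_ : (1%:C)%C = 1 :> R[i]) // mul1r.
by rewrite lerDr.
Qed.


Lemma main_lemma (phi : nat -> M -> R[i]) (lam : nat -> R)
  (sigma_crit : R)
  (L : nat -> nat) (X : nat -> nat -> M) (tau : nat -> nat -> R) (A B : R)
  (sigma : R) (f : M -> R[i]) (n : nat) (p : M -> R[i]) :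
  ONB mu phi ->
  eigen_ok lam ->
  (forall s, sigma_crit < s -> Csig_finite phi lam s) ->
  is_MZ mu phi lam L X tau A B ->
  sigma_crit < sigma ->
  inH mu phi lam sigma f ->
  series_rep mu phi f ->
  is_lsq phi lam L X tau n f p ->
  norm2 mu (fun x => f x - p x)
    <= Num.sqrt (1 + (B / A) ^+ 2) * Hnorm mu phi lam sigma f
       * phi_sigma phi lam sigma n.
Proof.
move=> hONB hEig hCs hMZ hsig [hfL2 hH] hrep [hpP hpmin].
have [Ccs hC] := hCs sigma hsig.
case: hEig => lam_mono lam0 lamoo.
have [N0 hN0] : exists N0, forall k, (N0 <= k)%N -> n%:R < lam k.
  move/cvgryPgt: lamoo => /(_ n%:R) [N0 _ hN].
  by exists N0 => k hk; apply: hN.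
set Pn := fun x => \sum_(k < N0 | lam k <= n%:R) fhat mu phi f k * phi k x.
have hPn : inP phi lam n Pn by exists N0, (fhat mu phi f).
set g := fun x => f x - Pn x.
set h := fun x => Pn x - p x.
have L2Pn : L2 mu Pn := inP_L2 phi lam hONB hPn.
have L2p : L2 mu p := inP_L2 phi lam hONB hpP.
have L2g : L2 mu g := L2B hfL2 L2Pn.
have L2h : L2 mu h := L2B L2Pn L2p.
have hinPh : inP phi lam n h.
  have := @inP_lin phi lam n 1 (-1) Pn p hPn hpP.
  suff -> : (fun x => 1 * Pn x + -1 * p x) = h by [].
  by apply: funext => x; rewrite /h mul1r mulN1r.
have gphi : forall j, lam j <= n%:R -> inner mu g (phi j) = 0.
  move=> j hj.
  have hjN : (j < N0)%N.
    rewrite ltnNge; apply/negP => /hN0; by rewrite real_ltNge ?num_real // hj.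
  rewrite (@inner_ext g (fun x => f x + -1 * Pn x) (phi j) (phi j)); last 2 first.
  - by move=> x; rewrite /g mulN1r.
  - by [].
  rewrite innerD_l //; try (by apply: L2Z); try (exact: (L2phi _ hONB)).
  rewrite innerZ_l //; try exact: (L2phi _ hONB).
  rewrite (@inner_sum N0 (fun k => lam k <= n%:R) (fun k x => fhat mu phi f k * phi k x)); last 2 first.
  - by move=> k; exact: (L2Z (fhat mu phi f k) (L2phi _ hONB k)).
  - exact: (L2phi _ hONB).
  rewrite (bigD1 (Ordinal hjN)) //= big1 => [|k /andP[_ hk]].
    rewrite innerZ_l; try exact: (L2phi _ hONB).
    case: hONB => _ orth _ _; rewrite orth eqxx mulr1 addr0 /fhat; ring.
  rewrite innerZ_l; try exact: (L2phi _ hONB).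
  case: hONB => _ orth _ _; rewrite orth.
  suff -> : (val k == j) = false by rewrite mulr0.
  by apply/negbTE; apply: contraNneq hk => kj; apply/eqP/val_inj.
have gh0 : inner mu g h = 0 := @inP_orth phi lam hONB n g h L2g gphi hinPh.
have pyth := @pythag g h L2g L2h gh0.
have [ps_tail ps0] := @ps_facts phi lam sigma n Ccs hC.
set Hl := limn (Hseries mu phi lam sigma f).
have Hl0 : 0 <= Hl.
  have nd := @series_nd (fun k => cnorm2 (fhat mu phi f k) * wgt lam sigma k)
     (fun k => mulr_ge0 (cnorm2_ge0 _) (ltW (wgt_gt0 lam sigma k))).
  apply: le_trans (nondecreasing_cvgn_le nd hH 0%N).
  by rewrite /series /= big_geq.
set S2 := Hl * phi_sigma phi lam sigma n ^+ 2.
have S20 : 0 <= S2 by rewrite mulr_ge0 // sqr_ge0.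
have gx : forall x, cnorm2 (g x) <= S2.
  move=> x; apply: le_trans (@pointwise_bound phi lam sigma f n N0 Ccs x hN0 hC hH hrep) _.
  by apply: ler_wpM2l.
have ng : norm2 mu g ^+ 2 <= S2 := @norm2_le g S2 L2g gx.
have efp : norm2 mu (fun x => f x - p x) = norm2 mu (fun x => g x + h x).
  by congr norm2; apply: funext => x; rewrite /g /h; ring.
case: hMZ => hA hB htau hmz.
have tau0 : forall k, (k < L n)%N -> 0 <= tau n k by move=> k hk; apply: ltW; apply: htau.
have hopt : forall t : R,
  \sum_(k < L n) cnorm2 ((fun x => f x - p x) (X n k)) * tau n k <=
  \sum_(k < L n) cnorm2 ((fun x => f x - p x) (X n k) - (t%:C)%C * h (X n k)) * tau n k.
  move=> t; have := hpmin _ (@inP_lin phi lam n (1 - (t%:C)%C) (t%:C)%C p Pn hpP hPn).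
  rewrite /sq_err /=; move=> H; apply: (le_trans H); rewrite le_eqVlt; apply/orP; left; apply/eqP.
  by apply: eq_bigr => k _; rewrite /h; congr (cnorm2 _ * _); ring.
have dp := @disc_proj (L n) (X n) (tau n) (fun x => f x - p x) h tau0 hopt.
have dg : \sum_(k < L n) cnorm2 (h (X n k)) * tau n k <= S2 * \sum_(k < L n) tau n k.
  apply: (le_trans dp); rewrite mulr_sumr; apply: ler_sum => k _.
  have -> : (fun x => f x - p x) (X n k) - h (X n k) = g (X n k) by rewrite /g /h /=; ring.
  by apply: ler_wpM2r; [apply: tau0; exact: ltn_ord | exact: gx].
have key : norm2 mu (fun x => f x - p x) ^+ 2 <= (1 + (B / A) ^+ 2) * S2.
  rewrite efp pyth.
  have [l0n|l0n] := boolP (lam 0%N <= n%:R).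
  - have hphi0 : inP phi lam n (phi 0%N).
      exists 1%N, (fun _ => 1) => x.
      by rewrite big_mkcond big_ord1 /= l0n mul1r.
    have n0 : norm2 mu (phi 0%N) ^+ 2 = 1.
      by rewrite norm2_sq; case: hONB => _ orth _ _; rewrite orth eqxx.
    have st : \sum_(k < L n) cnorm2 (phi 0%N (X n k)) * tau n k = \sum_(k < L n) tau n k.
      apply: eq_bigr => k _; case: hONB => _ _ _ ->.
      by rewrite /cnorm2 /= expr1n expr0n /= addr0 mul1r.
    have /andP[a1 a2] : (A <= \sum_(k < L n) tau n k) && (\sum_(k < L n) tau n k <= B).
      by have := hmz n _ hphi0; rewrite n0 !mulr1 st.
    have AB : A <= B := le_trans a1 a2.
    have hh : A * norm2 mu h ^+ 2 <= S2 * B.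
      have /andP[b1 _] := hmz n _ hinPh.
      apply: (le_trans b1); apply: (le_trans dg); exact: ler_wpM2l.
    have kap : 1 <= B / A by rewrite ler_pdivlMr // mul1r.
    have nh : norm2 mu h ^+ 2 <= S2 * (B / A).
      by rewrite mulrA ler_pdivlMr // mulrC.
    have : B / A <= (B / A) ^+ 2 by rewrite expr2 ler_peMl // (le_trans ler01 kap).
    move=> k2; rewrite mulrDl mul1r lerD //.
    by rewrite mulrC; apply: (le_trans nh); apply: ler_wpM2l.
  - have h0 : forall x, h x = 0.
      move=> x; case: hinPh => N [c hc]; rewrite hc big1 // => k hk.
      move: l0n; rewrite -real_ltNge ?num_real // => l0n.
      have := le_trans (lam_mono 0%N k (leq0n k)) hk.
      by rewrite leNgt l0n.
    have nh : norm2 mu h ^+ 2 <= 0 by apply: norm2_le => // x; rewrite h0 /cnorm2 /= expr0n /= addr0.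
    rewrite mulrDl mul1r.
    apply: lerD => //; first by apply: (le_trans nh); rewrite mulr_ge0 // sqr_ge0.
have R0 : 0 <= Num.sqrt (1 + (B / A) ^+ 2) * Hnorm mu phi lam sigma f * phi_sigma phi lam sigma n.
  by rewrite !mulr_ge0 ?sqrtr_ge0.
rewrite -ler_sqr ?nnegrE ?norm2_ge0 //.
have e1 : (Num.sqrt (1 + (B / A) ^+ 2) * Hnorm mu phi lam sigma f * phi_sigma phi lam sigma n) ^+ 2
    = (1 + (B / A) ^+ 2) * S2.
  rewrite /S2 /Hnorm -/Hl exprMn [X in X * _ ^+ 2]exprMn (sqr_sqrtr Hl0) sqr_sqrtr ?mulrA //.
  by rewrite addr_ge0 ?sqr_ge0.
by rewrite e1.
Qed.

End Aux.

Theorem theorem3p3 (R : realType) (M : ptopologicalType)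
  (mu : probability (Borel M) R) (phi : nat -> M -> R[i]) (lam : nat -> R)
  (sigma_crit : R)
  (L : nat -> nat) (X : nat -> nat -> M) (tau : nat -> nat -> R) (A B : R)
  (sigma : R) (f : M -> R[i]) (n : nat) (p : M -> R[i]) :
  compact [set: M] ->
  ONB mu phi ->
  eigen_ok lam ->
  (forall s, sigma_crit < s -> Csig_finite phi lam s) ->
  is_MZ mu phi lam L X tau A B ->
  sigma_crit < sigma ->
  inH mu phi lam sigma f ->
  series_rep mu phi f ->
  is_lsq phi lam L X tau n f p ->
  norm2 mu (fun x => f x - p x)
    <= Num.sqrt (1 + (B / A) ^+ 2) * Hnorm mu phi lam sigma f
       * phi_sigma phi lam sigma n.
Proof.
move=> _; exact: main_lemma.
Qed.
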